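(* Let $k\ge2$ and let $\tau\in\mathcal{S}_k$ be layered. Then there is a unique involution $\tilde\tau\in\mathcal{S}_{k+2}$ whose length-$k$ initial pattern equals $\tau$ and whose length-$(k+1)$ initial pattern is not an involution.
   Context: $\tau\in\mathcal{S}_k$ is layered if for some composition $(a_1,\ldots,a_m)$ of $k$ (all $a_i\ge1$), $\tau$ consists of the first $a_1$ positive integers in decreasing order, followed by the next $a_2$ positive integers in decreasing order, and so on. The pattern of a word of $j$ distinct letters is its order-preserving relabeling by $\{1,\ldots,j\}$; the length-$j$ initial pattern of a permutation $\sigma$ is the pattern of $\sigma_1\ldots\sigma_j$. *)

(* Defs.v *)
(* Permutations of {0,...,n-1} are 'S_n; values are 0-based. *)
From mathcomp Require Import all_boot all_fingroup.
Set Implicit Arguments. Unset Strict Implicit. Unset Printing Implicit Defensive.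

Definition word n (s : 'S_n) : seq nat := [seq val (s i) | i <- enum 'I_n].

(* pattern (order-preserving relabeling by {0,...,j-1}) of a word of distinct letters *)
Definition pattern (w : seq nat) : seq nat := [seq count (fun y => y < x) w | x <- w].

Definition init_pattern n (j : nat) (s : 'S_n) : seq nat := pattern (take j (word s)).

Fixpoint layered_word (o : nat) (c : seq nat) : seq nat :=
  match c with
  | [::] => [::]
  | a :: c' => rev (iota o a) ++ layered_word (o + a) c'
  end.

Definition layered k (t : 'S_k) : Prop :=
  exists c : seq nat, all (fun a => 0 < a) c /\ sumn c = k /\ word t = layered_word 0 c.

Definition involutive_perm n (s : 'S_n) : Prop := forall i, s (s i) = i.

Definition involutive_word (w : seq nat) : Prop :=
  forall i, i < size w -> nth 0 w (nth 0 w i) = i.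

(* Main.v *)
Require Import Defs.
From mathcomp Require Import all_boot all_fingroup zify.
Set Implicit Arguments. Unset Strict Implicit. Unset Printing Implicit Defensive.

Lemma size_lw o c : size (layered_word o c) = sumn c.
Proof.
elim: c o => [|a c IH] o //=. by rewrite size_cat size_rev size_iota IH.
Qed.

Lemma lw_rcons o c a :
  layered_word o (rcons c a) = layered_word o c ++ rev (iota (o + sumn c) a).
Proof.
elim: c o => [|b c IH] o /=; first by rewrite addn0 cats0.
by rewrite IH catA addnA.
Qed.

Lemma nth_rev_iota m a i : i < a -> nth 0 (rev (iota m a)) i = m + a - 1 - i.
Proof.
move=> ha; rewrite nth_rev size_iota // nth_iota; lia.
Qed.

Lemma lw_inv o c i : i < sumn c ->
  o <= nth 0 (layered_word o c) i < o + sumn c /\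
  nth 0 (layered_word o c) (nth 0 (layered_word o c) i - o) = o + i.
Proof.
elim: c o i => [|a c IH] o i //=.
move=> hi.
rewrite !nth_cat size_rev size_iota.
case: (ltnP i a) => hia.
  rewrite nth_rev_iota //.
  have -> : (o + a - 1 - i - o < a) = true by lia.
  rewrite nth_rev_iota; last by lia.
  split; lia.
have hi' : i - a < sumn c by lia.
have [/andP[h1 h2] h3] := IH (o + a) (i - a) hi'.
set v := nth 0 (layered_word (o + a) c) (i - a) in h1 h2 h3 *.
have -> : (v - o < a) = false by lia.
have -> : v - o - a = v - (o + a) by lia.
rewrite h3. split; lia.
Qed.

Lemma last_decomp (c : seq nat) : all (fun a => 0 < a) c -> 0 < sumn c ->
  exists c1 a, c = rcons c1 a /\ 0 < a /\ all (fun a => 0 < a) c1 /\ sumn c = sumn c1 + a.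
Proof.
case/lastP: c => [|c1 a] //= hall _.
exists c1, a; split => //.
move: hall; rewrite all_rcons => /andP[ha hc]; split => //; split => //.
by rewrite -cats1 sumn_cat /= addn0.
Qed.

Definition fn k (s : 'S_(k.+2)) (j : nat) : nat := val (s (inord j)).

Lemma word_fn k (s : 'S_(k.+2)) : word s = map (fn s) (iota 0 k.+2).
Proof.
rewrite /word -val_enum_ord -map_comp; apply: eq_map => i /=.
by rewrite /fn inord_val.
Qed.

Lemma pattern_map (f : nat -> nat) (I : seq nat) :
  pattern (map f I) = map (fun i => count (fun l => f l < f i) I) I.
Proof.
rewrite /pattern -map_comp; apply: eq_map => i /=.
by rewrite count_map.
Qed.

Lemma init_pat k (s : 'S_(k.+2)) j : j <= k.+2 ->
  init_pattern j s = map (fun i => count (fun l => fn s l < fn s i) (iota 0 j)) (iota 0 j).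
Proof.
move=> hj; rewrite /init_pattern word_fn -map_take take_iota.
have -> : minn j k.+2 = j by apply/minn_idPl.
by rewrite pattern_map.
Qed.

Lemma count_lt_iota v n : v <= n -> count (fun y => y < v) (iota 0 n) = v.
Proof.
elim: n => [|n IH] hv; first by move: hv; rewrite leqn0 => /eqP->.
rewrite -addn1 iotaD count_cat /= add0n addn0.
case: (leqP v n) => h.
  rewrite IH //; lia.
have -> : v = n.+1 by lia.
rewrite addn1; congr _.+1.
rewrite -[in RHS](size_iota 0 n) -count_predT.
by apply: eq_in_count => y; rewrite mem_iota => /andP[_ hy]; rewrite /= ltnS ltnW.
Qed.

Lemma count_bij (f : nat -> nat) n v :
  (forall i, i < n -> f i < n) -> (forall i, i < n -> f (f i) = i) -> v <= n ->
  count (fun l => f l < v) (iota 0 n) = v.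
Proof.
move=> hb hi hv.
have hp : perm_eq (map f (iota 0 n)) (iota 0 n).
  apply: uniq_perm.
  - rewrite map_inj_in_uniq ?iota_uniq // => x y.
    rewrite !mem_iota => /andP[_ hx] /andP[_ hy] e.
    by rewrite -(hi x) ?e ?hi //; lia.
  - exact: iota_uniq.
  - move=> x; rewrite mem_iota; apply/mapP/idP.
      by case=> y; rewrite mem_iota => /andP[_ hy] ->; have := hb y hy; lia.
    move=> /andP[_ hx]; exists (f x); last by rewrite hi.
    by rewrite mem_iota; have := hb x hx; lia.
move/seq.permP: hp => hp.
by rewrite -[RHS](count_lt_iota hv) -(hp (fun y => y < v)) count_map.
Qed.

Lemma count_k (f : nat -> nat) k v :
  (forall i, i < k.+2 -> f i < k.+2) -> (forall i, i < k.+2 -> f (f i) = i) -> v <= k.+2 ->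
  count (fun l => f l < v) (iota 0 k) = v - (f k < v) - (f k.+1 < v).
Proof.
move=> hb hi hv; have := count_bij hb hi hv.
rewrite -addn2 iotaD count_cat /= add0n. lia.
Qed.

Lemma count_k1 (f : nat -> nat) k v :
  (forall i, i < k.+2 -> f i < k.+2) -> (forall i, i < k.+2 -> f (f i) = i) -> v <= k.+2 ->
  count (fun l => f l < v) (iota 0 k.+1) = v - (f k.+1 < v).
Proof.
move=> hb hi hv.
have -> : iota 0 k.+1 = iota 0 k ++ [:: k] by rewrite -addn1 iotaD.
have := count_bij hb hi hv.
rewrite -addn2 iotaD count_cat /= add0n => H.
rewrite count_cat /=; lia.
Qed.

Definition Pf (f : nat -> nat) k i := f i - (f k.+1 < f i).

Lemma PfE (f : nat -> nat) k i Y v : f k.+1 = Y -> f i = v -> Pf f k i = v - (Y < v).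
Proof. by rewrite /Pf => -> ->. Qed.

Section Gen.
Variables (k : nat) (f g : nat -> nat).
Hypothesis hk : 2 <= k.
Hypothesis hb : forall i, i < k.+2 -> f i < k.+2.
Hypothesis hi : forall i, i < k.+2 -> f (f i) = i.
Hypothesis hK : forall i, i < k -> g i = f i - (f k < f i) - (f k.+1 < f i).
Hypothesis hNP : ~ (forall i, i <= k -> Pf f k (Pf f k i) = i).

Lemma gen_XY : f k.+1 < k /\ f k <= k /\ f (f k.+1) = k.+1 /\ g (f k.+1) = k.-1 /\
  (f k < k -> f (f k) = k /\ g (f k) = k - 2).
Proof.
have hY := hb (ltnSn k.+1); have hX := hb (ltnW (ltnSn k.+1)).
have hfY := hi (ltnSn k.+1); have hfX := hi (ltnW (ltnSn k.+1)).
set Y := f k.+1 in hY hfY *; set X := f k in hX hfX *.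
have hYk : Y < k.
  case: (ltngtP Y k) => // hYk.
    have eY : Y = k.+1 by lia.
    exfalso; apply: hNP => i hik.
    have hfi := hb (leq_trans hik (leqnSn _)). have hffi := hi (leq_trans hik (leqnSn _)).
    set j := f i in hfi hffi.
    have hj : j != k.+1 by apply/eqP => ej; move: hffi; rewrite ej -/Y eY; lia.
    rewrite (@PfE f k i Y j) //.
    have -> : j - (Y < j) = j by lia.
    rewrite (@PfE f k j Y i) //; lia.
  have eX : X = k.+1 by move: hfY; rewrite hYk => h; exact: h.
  exfalso; apply: hNP => i hik.
  case: (ltngtP i k) => hik'; last first.
  - rewrite hik' (@PfE f k k Y X) // (@PfE f k (X - (Y < X)) Y X); first by lia.
      by [].
    by have -> : X - (Y < X) = k by lia.
  - lia.
  have hfi := hb (leq_trans hik (leqnSn _)). have hffi := hi (leq_trans hik (leqnSn _)).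
  set j := f i in hfi hffi.
  have hjk : j != k by apply/eqP => ej; move: hffi; rewrite ej -/X eX; lia.
  have hjk1 : j != k.+1 by apply/eqP => ej; move: hffi; rewrite ej -/Y; lia.
  rewrite (@PfE f k i Y j) //.
  have -> : j - (Y < j) = j by lia.
  rewrite (@PfE f k j Y i) //; lia.
have hXk1 : X != k.+1 by apply/eqP => eX; move: hfX; rewrite eX -/Y; lia.
split => //; split; first by lia.
split => //.
have hgY := hK hYk; rewrite hfY -/X -/Y in hgY.
split; first by lia.
move=> hXk; split => //.
have := hK hXk; rewrite hfX -/X -/Y; lia.
Qed.

End Gen.

Lemma uniqK k (f1 f2 g : nat -> nat) :
  (forall i, i < k.+2 -> f1 i < k.+2) -> (forall i, i < k.+2 -> f1 (f1 i) = i) ->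
  (forall i, i < k.+2 -> f2 i < k.+2) -> (forall i, i < k.+2 -> f2 (f2 i) = i) ->
  (forall i, i < k -> g i = f1 i - (f1 k < f1 i) - (f1 k.+1 < f1 i)) ->
  (forall i, i < k -> g i = f2 i - (f2 k < f2 i) - (f2 k.+1 < f2 i)) ->
  f1 k = f2 k -> f1 k.+1 = f2 k.+1 ->
  forall i, i < k.+2 -> f1 i = f2 i.
Proof.
move=> hb1 hi1 hb2 hi2 hK1 hK2 eX eY i hi.
case: (ltngtP i k) => hik; last by rewrite hik.
  2: by have -> : i = k.+1 by lia.
have h1 := hK1 _ hik; have h2 := hK2 _ hik.
have hfX1 := hi1 k (ltnW (ltnSn _)); have hfY1 := hi1 k.+1 (ltnSn _).
have hfX2 := hi2 k (ltnW (ltnSn _)); have hfY2 := hi2 k.+1 (ltnSn _).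
have hv1 := hi1 i hi; have hv2 := hi2 i hi.
have hb1i := hb1 i hi; have hb2i := hb2 i hi.
rewrite eX eY in h1 hfX1 hfY1.
set X := f2 k in h1 h2 hfX1 hfY1 hfX2 hfY2.
set Y := f2 k.+1 in h1 h2 hfX1 hfY1 hfX2 hfY2.
set v1 := f1 i in h1 hv1 hb1i *. set v2 := f2 i in h2 hv2 hb2i *.
have n1X : v1 != X by apply/eqP => e; move: hv1; rewrite e hfX1; lia.
have n1Y : v1 != Y by apply/eqP => e; move: hv1; rewrite e hfY1; lia.
have n2X : v2 != X by apply/eqP => e; move: hv2; rewrite e hfX2; lia.
have n2Y : v2 != Y by apply/eqP => e; move: hv2; rewrite e hfY2; lia.
have nXY : X != Y by apply/eqP => e; move: hfX2; rewrite e hfY2; lia.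
lia.
Qed.

Section CoreA.
Variables (k s : nat) (g : nat -> nat).
Hypothesis hsk : s.+2 <= k.
Hypothesis HgL : forall i, i < s -> g i < s.
Hypothesis HgI : forall i, i < s -> g (g i) = i.
Hypothesis HgH : forall i, s <= i < k -> g i = s + k - 1 - i.

Definition FA i := if i < s then g i else if i < k then (if i == s then k.+1 else s + k - i)
  else if i == k then k else s.

Lemma FA_lo i : i < s -> FA i = g i. Proof. by rewrite /FA => ->. Qed.
Lemma FA_s : FA s = k.+1.
Proof. rewrite /FA ltnn eqxx; have -> : s < k by lia. by []. Qed.
Lemma FA_mid i : s < i < k -> FA i = s + k - i.
Proof.
move=> /andP[h1 h2]; rewrite /FA h2.
have -> : (i < s) = false by lia.
by have -> : (i == s) = false by lia.
Qed.
Lemma FA_k : FA k = k.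
Proof. rewrite /FA ltnn eqxx; by have -> : (k < s) = false by lia. Qed.
Lemma FA_k1 : FA k.+1 = s.
Proof.
rewrite /FA; have -> : (k.+1 < s) = false by lia.
have -> : (k.+1 < k) = false by lia. by have -> : (k.+1 == k) = false by lia.
Qed.

Lemma FA_b i : i < k.+2 -> FA i < k.+2.
Proof.
move=> hi; case: (ltngtP i s) => h.
- rewrite FA_lo //; have := HgL h; lia.
- case: (ltngtP i k) => h2.
  + rewrite FA_mid; lia.
  + have -> : i = k.+1 by lia. rewrite FA_k1; lia.
  + by rewrite h2 FA_k.
- by rewrite h FA_s.
Qed.

Lemma FA_inv i : i < k.+2 -> FA (FA i) = i.
Proof.
move=> hi; case: (ltngtP i s) => h.
- rewrite FA_lo // FA_lo ?HgI //; exact: HgL.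
- case: (ltngtP i k) => h2.
  + rewrite (@FA_mid i); last by lia. rewrite FA_mid; lia.
  + have -> : i = k.+1 by lia. by rewrite FA_k1 FA_s.
  + by rewrite h2 !FA_k.
- by rewrite h FA_s FA_k1.
Qed.

Lemma FA_K i : i < k -> g i = FA i - (FA k < FA i) - (FA k.+1 < FA i).
Proof.
move=> hi; rewrite FA_k FA_k1; case: (ltngtP i s) => h.
- rewrite FA_lo //; have := HgL h; lia.
- rewrite FA_mid; last by lia. rewrite HgH; lia.
- rewrite h FA_s HgH; lia.
Qed.

Lemma FA_NP : ~ (forall i, i <= k -> Pf FA k (Pf FA k i) = i).
Proof.
move=> H; have := H s (ltnW (ltnW hsk)).
rewrite (@PfE FA k s s k.+1) ?FA_k1 ?FA_s //.
have -> : k.+1 - (s < k.+1) = k by lia.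
rewrite (@PfE FA k k s k) ?FA_k1 ?FA_k //; lia.
Qed.

Lemma coreA_uniq (f : nat -> nat) :
  (forall i, i < k.+2 -> f i < k.+2) -> (forall i, i < k.+2 -> f (f i) = i) ->
  (forall i, i < k -> g i = f i - (f k < f i) - (f k.+1 < f i)) ->
  ~ (forall i, i <= k -> Pf f k (Pf f k i) = i) ->
  forall i, i < k.+2 -> f i = FA i.
Proof.
move=> hb hi hK hNP.
have hk : 2 <= k by lia.
have [hY [hX [hfY [hgY hXk]]]] := gen_XY hk hb hi hK hNP.
set Y := f k.+1 in hY hfY hgY hXk. set X := f k in hX hXk.
have eY : Y = s.
  case: (ltnP Y s) => h; first by have := HgL h; lia.
  have : g Y = s + k - 1 - Y by apply: HgH; lia.
  rewrite hgY; lia.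
have eX : X = k.
  case: (ltngtP X k) => // hXk'; last by lia.
  have [hfX hgX] := hXk hXk'.
  have eX : X = s.+1.
    case: (ltnP X s) => h; first by have := HgL h; lia.
    have : g X = s + k - 1 - X by apply: HgH; lia.
    rewrite hgX; lia.
  exfalso; apply: hNP.
  have F2 : forall i, i < s -> f i < s.
    move=> i his.
    have hb' : f i < k.+2 by apply: hb; lia.
    have hi' : f (f i) = i by apply: hi; lia.
    have : g i = f i - (f k < f i) - (f k.+1 < f i) by apply: hK; lia.
     rewrite -/X -/Y eX eY.
    have := HgL his.
    set v := f i in hb' hi' *.
    have nv1 : v != s by apply/eqP => e; move: hi'; rewrite e -eY hfY; lia.
    have nv2 : v != s.+1 by apply/eqP => e; move: hi'; rewrite e -eX hfX; lia.
    have nv3 : v != k by apply/eqP => e; move: hi'; rewrite e; rewrite -/X eX => e2; lia.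
    have nv4 : v != k.+1 by apply/eqP => e; move: hi'; rewrite e -/Y eY; lia.
    lia.
  have F3 : forall i, s.+2 <= i < k -> f i = s + k.+1 - i.
    move=> i /andP[h1 h2].
    have hb' : f i < k.+2 by apply: hb; lia.
    have hi' : f (f i) = i by apply: hi; lia.
    have := hK i h2; rewrite -/X -/Y eX eY.
    rewrite HgH; last by lia.
    set v := f i in hb' hi' *.
    have nv1 : v != s by apply/eqP => e; move: hi'; rewrite e -eY hfY; lia.
    have nv2 : v != s.+1 by apply/eqP => e; move: hi'; rewrite e -eX hfX; lia.
    have nv3 : v != k by apply/eqP => e; move: hi'; rewrite e; rewrite -/X eX => e2; lia.
    have nv4 : v != k.+1 by apply/eqP => e; move: hi'; rewrite e -/Y eY; lia.
    lia.
  have fs : f s = k.+1 by rewrite -eY.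
  have fs1 : f s.+1 = k by rewrite -eX.
  have fk : f k = s.+1 by rewrite -/X.
  have fk1 : f k.+1 = s by rewrite -/Y.
  move=> i hik.
  case: (ltngtP i s) => h.
  - have hv := F2 i h; have hv2 : f (f i) = i by apply: hi; lia.
    rewrite (@PfE f k i s (f i)) //.
    have -> : f i - (s < f i) = f i by lia.
    rewrite (@PfE f k (f i) s i) //; lia.
  - case: (ltngtP i k) => h2.
    + case: (ltngtP i s.+1) => h3; first by lia.
      * have hv : f i = s + k.+1 - i by apply: F3; lia.
        rewrite (@PfE f k i s (s + k.+1 - i)) //.
        have -> : s + k.+1 - i - (s < s + k.+1 - i) = s + k - i by lia.
        case: (ltngtP (s + k - i) s.+1) => h4; first by lia.
          rewrite (@PfE f k (s + k - i) s (i.+1)); first by lia. by [].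
          rewrite F3; [f_equal; lia | lia].
        rewrite h4 (@PfE f k s.+1 s k) //; lia.
      * rewrite h3 (@PfE f k s.+1 s k) //.
        have -> : k - (s < k) = k.-1 by lia.
        case: (ltngtP k.-1 s.+1) => h4; first by lia.
          rewrite (@PfE f k k.-1 s s.+2) //; first by lia.
          rewrite F3; [f_equal; lia | lia].
        by rewrite h4 (@PfE f k s.+1 s k) //; lia.
    + lia.
    + rewrite h2 (@PfE f k k s s.+1) //.
      have -> : s.+1 - (s < s.+1) = s by lia.
      rewrite (@PfE f k s s k.+1) //; lia.
  - rewrite h (@PfE f k s s k.+1) //.
    have -> : k.+1 - (s < k.+1) = k by lia.
    rewrite (@PfE f k k s s.+1) //; lia.
apply: (uniqK hb hi FA_b FA_inv hK FA_K).
- by rewrite FA_k.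
- by rewrite FA_k1.
Qed.

End CoreA.

Section CoreB.
Variables (k s r : nat) (g : nat -> nat).
Hypothesis hks : k = s.+1.
Hypothesis hrs : r < s.
Hypothesis HgL : forall i, i < r -> g i < r.
Hypothesis HgI : forall i, i < r -> g (g i) = i.
Hypothesis HgM : forall i, r <= i < s -> g i = r + s - 1 - i.
Hypothesis HgS : g s = s.

Definition FB i := if i < r then g i else if i < s then (if i == r then k else r + s - i)
  else if i == s then k.+1 else if i == k then r else s.

Lemma FB_lo i : i < r -> FB i = g i. Proof. by rewrite /FB => ->. Qed.
Lemma FB_r : FB r = k.
Proof. by rewrite /FB ltnn eqxx hrs. Qed.
Lemma FB_mid i : r < i < s -> FB i = r + s - i.
Proof.
move=> /andP[h1 h2]; rewrite /FB h2.
have -> : (i < r) = false by lia.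
by have -> : (i == r) = false by lia.
Qed.
Lemma FB_s : FB s = k.+1.
Proof. rewrite /FB ltnn eqxx; by have -> : (s < r) = false by lia. Qed.
Lemma FB_k : FB k = r.
Proof.
rewrite /FB hks; have -> : (s.+1 < r) = false by lia.
have -> : (s.+1 < s) = false by lia.
have -> : (s.+1 == s) = false by lia.
by rewrite eqxx.
Qed.
Lemma FB_k1 : FB k.+1 = s.
Proof.
rewrite /FB hks; have -> : (s.+2 < r) = false by lia.
have -> : (s.+2 < s) = false by lia.
have -> : (s.+2 == s) = false by lia.
by have -> : (s.+2 == s.+1) = false by lia.
Qed.

Lemma FB_b i : i < k.+2 -> FB i < k.+2.
Proof.
move=> hi; case: (ltngtP i r) => h.
- rewrite FB_lo //; have := HgL h; lia.
- case: (ltngtP i s) => h2.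
  + rewrite FB_mid; lia.
  + case: (ltngtP i k) => h3; first by lia.
    * have -> : i = k.+1 by lia. rewrite FB_k1; lia.
    * rewrite h3 FB_k; lia.
  + rewrite h2 FB_s; lia.
- rewrite h FB_r; lia.
Qed.

Lemma FB_inv i : i < k.+2 -> FB (FB i) = i.
Proof.
move=> hi; case: (ltngtP i r) => h.
- rewrite FB_lo // FB_lo ?HgI //; exact: HgL.
- case: (ltngtP i s) => h2.
  + rewrite (@FB_mid i); last by lia. rewrite FB_mid; lia.
  + case: (ltngtP i k) => h3; first by lia.
    * have -> : i = k.+1 by lia. by rewrite FB_k1 FB_s.
    * by rewrite h3 FB_k FB_r.
  + by rewrite h2 FB_s FB_k1.
- by rewrite h FB_r FB_k.
Qed.

Lemma FB_K i : i < k -> g i = FB i - (FB k < FB i) - (FB k.+1 < FB i).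
Proof.
move=> hi; rewrite FB_k FB_k1; case: (ltngtP i r) => h.
- rewrite FB_lo //; have := HgL h; lia.
- case: (ltngtP i s) => h2.
  + rewrite FB_mid; last by lia. rewrite HgM; lia.
  + lia.
  + rewrite h2 FB_s HgS; lia.
- rewrite h FB_r HgM; lia.
Qed.

Lemma FB_NP : ~ (forall i, i <= k -> Pf FB k (Pf FB k i) = i).
Proof.
move=> H; have := H r (_ : r <= k).
rewrite (@PfE FB k r s k) ?FB_k1 ?FB_r //.
have -> : k - (s < k) = s by lia.
rewrite (@PfE FB k s s k.+1) ?FB_k1 ?FB_s //; lia.
Qed.

Lemma coreB_uniq (f : nat -> nat) :
  (forall i, i < k.+2 -> f i < k.+2) -> (forall i, i < k.+2 -> f (f i) = i) ->
  (forall i, i < k -> g i = f i - (f k < f i) - (f k.+1 < f i)) ->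
  ~ (forall i, i <= k -> Pf f k (Pf f k i) = i) ->
  forall i, i < k.+2 -> f i = FB i.
Proof.
move=> hb hi hK hNP.
have hk : 2 <= k by lia.
have [hY [hX [hfY [hgY hXk]]]] := gen_XY hk hb hi hK hNP.
set Y := f k.+1 in hY hfY hgY hXk. set X := f k in hX hXk.
have eY : Y = s.
  case: (ltnP Y r) => h; first by have := HgL h; lia.
  case: (ltnP Y s) => h2; last by lia.
  have : g Y = r + s - 1 - Y by apply: HgM; lia.
  rewrite hgY; lia.
have eX : X = r.
  case: (ltngtP X k) => hXk'; last first.
  - exfalso; apply: hNP => i hik.
    have fk : f k = k by rewrite -/X.
    have fk1 : f k.+1 = s by rewrite -/Y.
    have fs : f s = k.+1 by rewrite -eY.
    case: (ltngtP i s) => h.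
    + have hb' : f i < k.+2 by apply: hb; lia.
      have hi' : f (f i) = i by apply: hi; lia.
      have nv1 : f i != s by apply/eqP => e; move: hi'; rewrite e fs; lia.
      have nv3 : f i != k by apply/eqP => e; move: hi'; rewrite e fk; lia.
      have nv4 : f i != k.+1 by apply/eqP => e; move: hi'; rewrite e fk1; lia.
      rewrite (@PfE f k i s (f i)) //.
      have -> : f i - (s < f i) = f i by lia.
      rewrite (@PfE f k (f i) s i) //; lia.
    + have -> : i = k by lia.
      rewrite (@PfE f k k s k) //.
      have -> : k - (s < k) = s by lia.
      rewrite (@PfE f k s s k.+1) //; lia.
    + rewrite h (@PfE f k s s k.+1) //.
      have -> : k.+1 - (s < k.+1) = k by lia.
      rewrite (@PfE f k k s k) //; lia.
  - lia.
  - have [hfX hgX] := hXk hXk'.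
    have hXs : X != s by apply/eqP => e; move: hfX; rewrite e -eY hfY; lia.
    case: (ltnP X r) => h; first by have := HgL h; lia.
    have : g X = r + s - 1 - X by apply: HgM; lia.
    rewrite hgX; lia.
apply: (uniqK hb hi FB_b FB_inv hK FB_K).
- by rewrite FB_k.
- by rewrite FB_k1.
Qed.

End CoreB.

Lemma fn_b k (s : 'S_(k.+2)) i : fn s i < k.+2.
Proof. exact: ltn_ord. Qed.

Lemma fn_b' k (s : 'S_(k.+2)) : forall i, i < k.+2 -> fn s i < k.+2.
Proof. move=> i _; exact: fn_b. Qed.

Lemma Pf_ext k (f1 f2 : nat -> nat) : (forall j, j < k.+2 -> f1 j = f2 j) ->
  forall j, j < k.+2 -> Pf f1 k j = Pf f2 k j.
Proof. by move=> e j hj; rewrite /Pf !e. Qed.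

Lemma Pf_le (f : nat -> nat) k j : Pf f k j <= f j.
Proof. rewrite /Pf; lia. Qed.

Lemma fn_inv k (s : 'S_(k.+2)) : involutive_perm s -> forall i, i < k.+2 -> fn s (fn s i) = i.
Proof.
move=> hs i hi; rewrite /fn inord_val hs /=; exact: inordK.
Qed.

Lemma cond_K k (s : 'S_(k.+2)) (w : seq nat) :
  (forall i, i < k.+2 -> fn s (fn s i) = i) -> size w = k ->
  (init_pattern k s = w <->
   forall i, i < k -> nth 0 w i = fn s i - (fn s k < fn s i) - (fn s k.+1 < fn s i)).
Proof.
move=> hi hw; rewrite init_pat; last by lia.
split.
  move=> <- i hik; rewrite (nth_map 0) ?size_iota // nth_iota //.
  by rewrite (count_k (@fn_b' k s) hi) // ltnW // fn_b.
move=> H; apply: (eq_from_nth (x0 := 0)); first by rewrite size_map size_iota hw.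
move=> i; rewrite size_map size_iota => hik.
rewrite (nth_map 0) ?size_iota // nth_iota // H //.
by rewrite (count_k (@fn_b' k s) hi) // ltnW // fn_b.
Qed.

Lemma cond_P k (s : 'S_(k.+2)) :
  (forall i, i < k.+2 -> fn s (fn s i) = i) ->
  (involutive_word (init_pattern k.+1 s) <->
   forall i, i <= k -> Pf (fn s) k (Pf (fn s) k i) = i).
Proof.
move=> hi; rewrite /involutive_word init_pat // size_map size_iota.
have hn : forall i, i < k.+1 ->
    nth 0 [seq count (fun l => fn s l < fn s i0) (iota 0 k.+1) | i0 <- iota 0 k.+1] i = Pf (fn s) k i.
  move=> i hik; rewrite (nth_map 0) ?size_iota // nth_iota //.
  by rewrite (count_k1 (@fn_b' k s) hi) // ltnW // fn_b.
have hPb : forall i, i < k.+1 -> Pf (fn s) k i < k.+1.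
  move=> i hik; rewrite /Pf.
  have h1 := @fn_b k s i; have h2 := @fn_b k s k.+1.
  have h3 := hi i (ltnW hik); have h4 := hi k.+1 (ltnSn _).
  case: (ltngtP (fn s i) k.+1) => h; first by lia.
    by lia.
  move: h3; rewrite h => h3.
  have : fn s k.+1 != k.+1 by apply/eqP => e; move: h3; rewrite -h4 e; lia.
  lia.
split.
  move=> H i hik; have := H i hik; by rewrite (hn i hik) (hn _ (hPb i hik)).
move=> H i hik; rewrite (hn i hik) (hn _ (hPb i hik)); exact: H.
Qed.

Lemma finish k (w : seq nat) (F : nat -> nat) : size w = k ->
  (forall i, i < k.+2 -> F i < k.+2) -> (forall i, i < k.+2 -> F (F i) = i) ->
  (forall i, i < k -> nth 0 w i = F i - (F k < F i) - (F k.+1 < F i)) ->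
  ~ (forall i, i <= k -> Pf F k (Pf F k i) = i) ->
  (forall f : nat -> nat, (forall i, i < k.+2 -> f i < k.+2) ->
     (forall i, i < k.+2 -> f (f i) = i) ->
     (forall i, i < k -> nth 0 w i = f i - (f k < f i) - (f k.+1 < f i)) ->
     ~ (forall i, i <= k -> Pf f k (Pf f k i) = i) ->
     forall i, i < k.+2 -> f i = F i) ->
  exists! s : 'S_(k.+2),
    involutive_perm s /\ init_pattern k s = w /\ ~ involutive_word (init_pattern k.+1 s).
Proof.
move=> hw hb hi hK hNP hU.
pose h (i : 'I_(k.+2)) : 'I_(k.+2) := inord (F i).
have hinj : injective h.
  move=> i j; rewrite /h => /(congr1 (@nat_of_ord _)); rewrite !inordK ?hb // => e.
  by apply: val_inj; rewrite /= -(hi i) // e hi.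
pose p := perm hinj.
have hfp : forall j, j < k.+2 -> fn p j = F j.
  move=> j hj; have e : nat_of_ord (inord j : 'I_(k.+2)) = j by rewrite inordK.
  rewrite /fn permE /h /= e inordK //; exact: hb.
have hinvp : involutive_perm p.
  move=> i; apply: val_inj.
  have e1 := hfp i (ltn_ord i).
  have := hfp (val (p i)) (ltn_ord _).
  rewrite /fn !inord_val => ->.
  rewrite /fn inord_val in e1; rewrite e1 hi //.
have hip := fn_inv hinvp.
have Ekk : forall q : 'S_(k.+2), forall j, j < k -> forall G : nat -> nat,
   (forall j, j < k.+2 -> fn q j = G j) ->
   fn q j - (fn q k < fn q j) - (fn q k.+1 < fn q j) = G j - (G k < G j) - (G k.+1 < G j).
  move=> q j hj G hG; rewrite !hG //; lia.
exists p; split.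
  split => //; split.
    apply/(cond_K hip hw) => i hik; by rewrite hK // (Ekk p i hik F hfp).
  rewrite (cond_P hip) => H; apply: hNP => i hik.
  have hik2 : i < k.+2 by lia.
  have e1 := Pf_ext hfp hik2.
  have hP : Pf F k i < k.+2 by apply: leq_ltn_trans (Pf_le F k i) (hb _ hik2).
  by rewrite -(Pf_ext hfp hP) -e1 H.
move=> q [hq [hqK hqP]].
have hiq := fn_inv hq.
have E := hU (fn q) (@fn_b' k q) hiq ((cond_K hiq hw).1 hqK)
           (fun H => hqP ((cond_P hiq).2 H)).
apply/permP => i; apply: val_inj; rewrite /= permE /h.
rewrite -E // /fn inord_val inordK //; exact: ltn_ord.
Qed.

Lemma lwg_lo c1 a i : i < sumn c1 ->
  nth 0 (layered_word 0 (rcons c1 a)) i = nth 0 (layered_word 0 c1) i.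
Proof. by move=> hi; rewrite lw_rcons nth_cat size_lw hi. Qed.

Lemma lwg_hi c1 a i : sumn c1 <= i < sumn c1 + a ->
  nth 0 (layered_word 0 (rcons c1 a)) i = sumn c1 + a - 1 - (i - sumn c1).
Proof.
move=> /andP[h1 h2]; rewrite lw_rcons nth_cat size_lw.
have -> : (i < sumn c1) = false by lia.
rewrite nth_rev_iota; lia.
Qed.

Lemma lwg_inv c1 a i : i < sumn c1 ->
  nth 0 (layered_word 0 (rcons c1 a)) i < sumn c1 /\
  nth 0 (layered_word 0 (rcons c1 a)) (nth 0 (layered_word 0 (rcons c1 a)) i) = i.
Proof.
move=> hi; have [/andP[_ h1] h2] := lw_inv 0 hi.
rewrite (lwg_lo a hi) (lwg_lo a h1).
rewrite subn0 in h2; by rewrite h2.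
Qed.

Theorem mainTheorem11 (k : nat) (hk : 2 <= k) (t : 'S_k) (ht : layered t) :
  exists! s : 'S_(k.+2),
    involutive_perm s /\ init_pattern k s = word t /\
    ~ involutive_word (init_pattern k.+1 s).
Proof.
case: ht => c [hall [hsum hw]].
rewrite hw.
have hpos : 0 < sumn c by lia.
have [c1 [a [ec [ha [hall1 hs]]]]] := last_decomp hall hpos.
set s := sumn c1 in hs.
have hsw : size (layered_word 0 c) = k by rewrite size_lw.
set g := fun i => nth 0 (layered_word 0 c) i.
have Hlo : forall i, i < s -> g i < s by move=> i hi; rewrite /g ec; case: (lwg_inv a hi).
have HI : forall i, i < s -> g (g i) = i by move=> i hi; rewrite /g ec; case: (lwg_inv a hi).
have Hhi : forall i, s <= i < k -> g i = s + k - 1 - i.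
  move=> i hi; rewrite /g ec lwg_hi -/s; lia.
case: (ltnP 1 a) => ha2.
  have hsk : s.+2 <= k by lia.
  apply: (@finish k _ (FA k s g)) => //.
  - exact: FA_b.
  - exact: FA_inv.
  - exact: FA_K.
  - exact: FA_NP.
  - move=> f hb hi hK hNP; exact: (coreA_uniq hsk Hlo HI Hhi hb hi hK hNP).
have ea : a = 1 by lia.
have hs1 : 0 < sumn c1 by lia.
have [c2 [b [ec1 [hb [hall2 hs2]]]]] := last_decomp hall1 hs1.
set r := sumn c2 in hs2.
have hks : k = s.+1 by lia.
have hrs : r < s by lia.
have Hlo2 : forall i, i < r -> g i < r.
  move=> i hi; have his : i < s by lia.
  rewrite /g ec (lwg_lo _ his) ec1; by case: (lwg_inv b hi).
have HI2 : forall i, i < r -> g (g i) = i.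
  move=> i hi; apply: HI; lia.
have HM : forall i, r <= i < s -> g i = r + s - 1 - i.
  move=> i hi; have his : i < s by lia.
  rewrite /g ec (lwg_lo _ his) ec1 lwg_hi -/r; lia.
have HS : g s = s by rewrite Hhi; lia.
apply: (@finish k _ (FB k s r g)) => //.
- exact: FB_b.
- exact: FB_inv.
- exact: FB_K.
- exact: FB_NP.
- move=> f hb' hi hK hNP; exact: (coreB_uniq hks hrs Hlo2 HI2 HM HS hb' hi hK hNP).
Qed.
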